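(* Let $\mathsf{M}^s=\{\langle v,\mathfrak{R}\rangle:\mathfrak{R}\text{ is symmetric}\}$ and $\mathsf{M}^n=\{\langle v,\mathfrak{R}\rangle:\text{for all }\varphi,\psi,\ \langle\neg\varphi,\psi\rangle\in\mathfrak{R}\Rightarrow\langle\varphi,\psi\rangle\in\mathfrak{R}\}$ (with $v$ ranging over all valuations). Neither $\mathsf{M}^s$ nor $\mathsf{M}^n$ is definable.
   Context: Language: propositional letters $\Phi=\{p_0,p_1,\dots\}$; connectives $\neg$, $\lor,\wedge,\to,\leftrightarrow,\vartriangle,\looparrowright$; $\mathsf{FOR}$ the set of all formulas. An Epstein model is $\langle v,\mathfrak{R}\rangle$ with $v:\Phi\to\{0,1\}$ and $\mathfrak{R}\subseteq\mathsf{FOR}^2$; truth: letters via $v$, boolean connectives classical, $\langle v,\mathfrak{R}\rangle\vDash\varphi\vartriangle\psi$ iff both true and $\langle\varphi,\psi\rangle\in\mathfrak{R}$; $\langle v,\mathfrak{R}\rangle\vDash\varphi\looparrowright\psi$ iff $\varphi\to\psi$ true and $\langle\varphi,\psi\rangle\in\mathfrak{R}$. A set $\mathsf{K}$ of Epstein models is definable iff there is $\Gamma\subseteq\mathsf{FOR}$ such that for every Epstein model $\mathfrak{M}$: $\mathfrak{M}\vDash\gamma$ for all $\gamma\in\Gamma$ iff $\mathfrak{M}\in\mathsf{K}$. *)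

(* Defs.v *)
Inductive form : Type :=
| Var : nat -> form
| Neg : form -> form
| Or : form -> form -> form
| And : form -> form -> form
| Imp : form -> form -> form
| Iff : form -> form -> form
| Tri : form -> form -> form
| Loop : form -> form -> form.

Record emodel : Type := EModel {
  val : nat -> bool;
  rel : form -> form -> Prop
}.

Fixpoint sat (M : emodel) (f : form) : Prop :=
  match f with
  | Var n => val M n = true
  | Neg a => ~ sat M a
  | Or a b => sat M a \/ sat M b
  | And a b => sat M a /\ sat M b
  | Imp a b => sat M a -> sat M b
  | Iff a b => (sat M a <-> sat M b)
  | Tri a b => (sat M a /\ sat M b) /\ rel M a b
  | Loop a b => (sat M a -> sat M b) /\ rel M a b
  end.

Definition definable (K : emodel -> Prop) : Prop :=
  exists Gamma : form -> Prop,
    forall M : emodel, (forall g, Gamma g -> sat M g) <-> K M.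

Definition Ms (M : emodel) : Prop :=
  forall a b, rel M a b -> rel M b a.

Definition Mn (M : emodel) : Prop :=
  forall a b, rel M (Neg a) b -> rel M a b.

(* Main.v *)
Require Import Defs.

Definition M1 : emodel := EModel (fun _ => false) (fun _ _ => False).
Definition M3 : emodel :=
  EModel (fun _ => false) (fun a b => sat M1 a /\ ~ sat M1 b).

Lemma sat13 : forall f, sat M3 f <-> sat M1 f.
Proof.
  induction f; simpl in *; try tauto.
Qed.

Lemma transfer (K : emodel -> Prop) : definable K -> K M1 -> K M3.
Proof.
  intros [G HG] H1. apply HG. intros g Hg. apply sat13.
  apply (proj2 (HG M1) H1). exact Hg.
Qed.

Theorem mainTheorem12 : ~ definable Ms /\ ~ definable Mn.
Proof.
  split; intro D.
  - assert (H : Ms M3) by (apply (transfer _ D); intros a b []).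
    specialize (H (Neg (Var 0)) (Var 0)). simpl in H.
    destruct H as [h _]; [split; simpl; [intro h; discriminate h | intro h; discriminate h] | simpl in h; discriminate h].
  - assert (H : Mn M3) by (apply (transfer _ D); intros a b []).
    specialize (H (Var 0) (Var 0)). simpl in H.
    destruct H as [h _]; [split; simpl; [intro h; discriminate h | intro h; discriminate h] | discriminate h].
Qed.
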